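(* Let $\rho \in \mathcal{S}$ and let $\sigma \in \mathcal{P}$ be non-zero. Then \[ D^{\mathbb{P}}(\rho\|\sigma)=\sup_{\omega > 0}\Big(\operatorname{tr}[\rho \log \omega] - \log \operatorname{tr}[\sigma \omega]\Big)=\sup_{\omega > 0}\Big( \operatorname{tr}[\rho \log \omega]+1-\operatorname{tr}[\sigma \omega]\Big), \] where the suprema are over positive definite operators $\omega$ on the $d$-dimensional Hilbert space (all three quantities equal $+\infty$ when the support of $\rho$ is not contained in the support of $\sigma$). Moreover, if $\rho>0$ and $\sigma>0$ (positive definite), both suprema are attained.
   Context: Work on a $d$-dimensional complex Hilbert space ($d\in\mathbb{N}$). $\mathcal{P}$ denotes the set of positive semidefinite operators and $\mathcal{S}\subset\mathcal{P}$ the density operators (unit trace). $\log$ is the natural logarithm. The projectively measured relative entropy is \[ D^{\mathbb{P}}(\rho\|\sigma) := \sup_{ \{ P_i \}_{i=1}^d} \sum_{i=1}^d \operatorname{tr} [P_i \rho] \log \frac{\operatorname{tr} [P_i \rho]}{\operatorname{tr} [P_i \sigma]}, \] the supremum over all families of $d$ mutually orthogonal (rank-one) projectors, with conventions $0\log\frac{0}{q}=0$ and $p\log\frac{p}{0}=+\infty$ for $p>0$. *)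

(* Defs.v *)
(* complex numbers as pairs of Stdlib reals, d x d complex
   matrices as functions nat -> nat -> C whose entries with indices < d
   are the only relevant ones. *)
From Stdlib Require Import Reals Arith.
Open Scope R_scope.

Definition C := (R * R)%type.
Definition C0 : C := (0, 0).
Definition C1 : C := (1, 0).
Definition RtoC (r : R) : C := (r, 0).
Definition Cadd (a b : C) : C := (fst a + fst b, snd a + snd b).
Definition Cmul (a b : C) : C :=
  (fst a * fst b - snd a * snd b, fst a * snd b + snd a * fst b).
Definition Cconj (a : C) : C := (fst a, - snd a).

Fixpoint csum (n : nat) (f : nat -> C) : C :=
  match n with
  | O => C0
  | S m => Cadd (csum m f) (f m)
  end.

Definition Vec := nat -> C.
Definition Mat := nat -> nat -> C.

Definition mmul (d : nat) (A B : Mat) : Mat :=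
  fun i j => csum d (fun k => Cmul (A i k) (B k j)).
Definition mapply (d : nat) (A : Mat) (x : Vec) : Vec :=
  fun i => csum d (fun j => Cmul (A i j) (x j)).
Definition inner (d : nat) (x y : Vec) : C :=
  csum d (fun i => Cmul (Cconj (x i)) (y i)).
Definition trace (d : nat) (A : Mat) : C := csum d (fun i => A i i).
Definition outer (x y : Vec) : Mat := fun i j => Cmul (x i) (Cconj (y j)).

Definition meq (d : nat) (A B : Mat) : Prop :=
  forall i j, (i < d)%nat -> (j < d)%nat -> A i j = B i j.

Definition hermitian (d : nat) (A : Mat) : Prop :=
  forall i j, (i < d)%nat -> (j < d)%nat -> A i j = Cconj (A j i).

Definition psd (d : nat) (A : Mat) : Prop :=
  hermitian d A /\ forall x : Vec, 0 <= fst (inner d x (mapply d A x)).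

Definition nonzero_vec (d : nat) (x : Vec) : Prop :=
  exists i, (i < d)%nat /\ x i <> C0.

Definition pd (d : nat) (A : Mat) : Prop :=
  hermitian d A /\
  forall x : Vec, nonzero_vec d x -> 0 < fst (inner d x (mapply d A x)).

Definition density (d : nat) (A : Mat) : Prop := psd d A /\ trace d A = C1.

Definition nonzero_mat (d : nat) (A : Mat) : Prop :=
  exists i j, (i < d)%nat /\ (j < d)%nat /\ A i j <> C0.

Definition rank1_proj (d : nat) (P : Mat) : Prop :=
  exists u : Vec, inner d u u = C1 /\ meq d P (outer u u).

Definition proj_family (d : nat) (P : nat -> Mat) : Prop :=
  (forall i, (i < d)%nat -> rank1_proj d (P i)) /\
  (forall i j, (i < d)%nat -> (j < d)%nat -> i <> j ->
     meq d (mmul d (P i) (P j)) (fun _ _ => C0)).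

Inductive ER := Fin (r : R) | PInf | MInf.

Definition Ele (x y : ER) : Prop :=
  match x, y with
  | MInf, _ => True
  | _, PInf => True
  | Fin a, Fin b => a <= b
  | _, _ => False
  end.

Definition Eadd (x y : ER) : ER :=
  match x, y with
  | Fin a, Fin b => Fin (a + b)
  | PInf, _ | _, PInf => PInf
  | _, _ => MInf
  end.

Fixpoint Esum (n : nat) (f : nat -> ER) : ER :=
  match n with
  | O => Fin 0
  | S m => Eadd (Esum m f) (f m)
  end.

Definition is_lub_E (S : ER -> Prop) (v : ER) : Prop :=
  (forall y, S y -> Ele y v) /\
  (forall z, (forall y, S y -> Ele y z) -> Ele v z).

Definition rel_term (p q : R) : ER :=
  if Req_EM_T p 0 then Fin 0
  else if Req_EM_T q 0 then PInf
  else Fin (p * ln (p / q)).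

Definition meas_value (d : nat) (rho sigma : Mat) (P : nat -> Mat) : ER :=
  Esum d (fun i => rel_term (fst (trace d (mmul d (P i) rho)))
                            (fst (trace d (mmul d (P i) sigma)))).

(* the set whose supremum is D^P(rho||sigma) *)
Definition DP_set (d : nat) (rho sigma : Mat) (v : ER) : Prop :=
  exists P, proj_family d P /\ v = meas_value d rho sigma P.

Definition orthonormal (d : nat) (u : nat -> Vec) : Prop :=
  forall i j, (i < d)%nat -> (j < d)%nat ->
    inner d (u i) (u j) = if Nat.eq_dec i j then C1 else C0.

Definition spectral_sum (d : nat) (u : nat -> Vec) (f : nat -> R) : Mat :=
  fun i j => csum d (fun k => Cmul (RtoC (f k)) (outer (u k) (u k) i j)).

Definition mat_log (d : nat) (w L : Mat) : Prop :=
  exists (u : nat -> Vec) (lam : nat -> R),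
    orthonormal d u /\ (forall k, (k < d)%nat -> 0 < lam k) /\
    meq d w (spectral_sum d u lam) /\
    meq d L (spectral_sum d u (fun k => ln (lam k))).

Definition var1 (d : nat) (rho sigma w L : Mat) : R :=
  fst (trace d (mmul d rho L)) - ln (fst (trace d (mmul d sigma w))).

Definition var2 (d : nat) (rho sigma w L : Mat) : R :=
  fst (trace d (mmul d rho L)) + 1 - fst (trace d (mmul d sigma w)).

Definition set1 (d : nat) (rho sigma : Mat) (v : ER) : Prop :=
  exists w L, pd d w /\ mat_log d w L /\ v = Fin (var1 d rho sigma w L).

Definition set2 (d : nat) (rho sigma : Mat) (v : ER) : Prop :=
  exists w L, pd d w /\ mat_log d w L /\ v = Fin (var2 d rho sigma w L).

(* supp rho ⊆ supp sigma, i.e. ker sigma ⊆ ker rho *)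
Definition supp_incl (d : nat) (rho sigma : Mat) : Prop :=
  forall x : Vec, (forall i, (i < d)%nat -> mapply d sigma x i = C0) ->
                  forall i, (i < d)%nat -> mapply d rho x i = C0.

(* Main.v *)
Require Import Defs.
From Stdlib Require Import Reals Arith.
Open Scope R_scope.

Module MCpart.
From mathcomp Require Import all_boot all_algebra.
From mathcomp Require Import Rstruct.
From mathcomp Require Import complex.
Import GRing.Theory.
Local Open Scope ring_scope.

Definition toC (a : Defs.C) : R[i] := Complex (fst a) (snd a).

Lemma toC_add a b : toC (Cadd a b) = toC a + toC b.
Proof. by case: a => a1 a2; case: b => b1 b2. Qed.

Lemma toC_mul a b : toC (Cmul a b) = toC a * toC b.
Proof. by case: a => a1 a2; case: b => b1 b2. Qed.

Lemma toC0 : toC Defs.C0 = 0. Proof. by []. Qed.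
Lemma toC1 : toC Defs.C1 = 1. Proof. by []. Qed.

Lemma toC_inj a b : toC a = toC b -> a = b.
Proof. by case: a => a1 a2; case: b => b1 b2 [-> ->]. Qed.

Lemma toC_csum n f : toC (csum n f) = \sum_(k < n) toC (f k).
Proof.
elim: n => [|n IH]; first by rewrite big_ord0.
by rewrite big_ord_recr /= toC_add IH.
Qed.

Lemma completeness (d : nat) (u : nat -> Vec) :
  Defs.orthonormal d u ->
  forall i j, (i < d)%coq_nat -> (j < d)%coq_nat ->
  csum d (fun k => Cmul (u k i) (Cconj (u k j))) =
  (match Nat.eq_dec i j with left _ => Defs.C1 | right _ => Defs.C0 end).
Proof.
move=> Hu i j /ltP Hi /ltP Hj.
pose A : 'M[R[i]]_d := \matrix_(a < d, k < d) toC (u k a).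
pose B : 'M[R[i]]_d := \matrix_(k < d, a < d) toC (Cconj (u k a)).
have HBA : B *m A = 1%:M.
  apply/matrixP => k l; rewrite !mxE.
  under eq_bigr do rewrite !mxE.
  have := Hu k l (elimT ltP (ltn_ord k)) (elimT ltP (ltn_ord l)).
  rewrite /Defs.inner => H.
  under eq_bigr do rewrite -toC_mul.
  rewrite -(toC_csum d (fun a => Cmul (Cconj (u k a)) (u l a))) H.
  case: Nat.eq_dec => [/val_inj -> | Hne]; first by rewrite eqxx.
  have -> : (k == l) = false by apply/negbTE/eqP => E; apply: Hne; rewrite E.
  by [].
have HAB := mulmx1C HBA.
have := congr1 (fun M : 'M[R[i]]_d => M (Ordinal Hi) (Ordinal Hj)) HAB.
rewrite /= !mxE.
under eq_bigr do rewrite !mxE -toC_mul.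
rewrite -(toC_csum d (fun k => Cmul (u k i) (Cconj (u k j)))).
move=> H; apply: toC_inj; rewrite H.
case: Nat.eq_dec => [E | Hne].
  have -> : Ordinal Hi = Ordinal Hj by apply: val_inj; rewrite /= E.
  by rewrite eqxx.
have -> : (Ordinal Hi == Ordinal Hj) = false.
  by apply/negbTE/eqP => E; apply: Hne; have := congr1 val E.
by [].
Qed.
End MCpart.

From Stdlib Require Import Reals Arith Lra Lia Psatz Ring Setoid Morphisms List ZArith.
From Stdlib Require Import ClassicalEpsilon.
Import Defs.
Open Scope R_scope.


Definition Copp (a : C) : C := (- fst a, - snd a).
Definition Csub (a b : C) : C := Cadd a (Copp b).

Lemma C_ext (a b : C) : fst a = fst b -> snd a = snd b -> a = b.
Proof. destruct a, b; simpl; intros -> ->; reflexivity. Qed.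

Lemma Cring : ring_theory C0 C1 Cadd Cmul Csub Copp (@eq C).
Proof.
  constructor; intros; apply C_ext; unfold Cadd, Cmul, Csub, Copp, C0, C1; simpl; ring.
Qed.
Add Ring Cr : Cring.

Lemma Cconj_add a b : Cconj (Cadd a b) = Cadd (Cconj a) (Cconj b).
Proof. apply C_ext; unfold Cconj, Cadd; simpl; ring. Qed.
Lemma Cconj_mul a b : Cconj (Cmul a b) = Cmul (Cconj a) (Cconj b).
Proof. apply C_ext; unfold Cconj, Cmul; simpl; ring. Qed.
Lemma Cconj_invol a : Cconj (Cconj a) = a.
Proof. apply C_ext; unfold Cconj; simpl; ring. Qed.
Lemma Cconj_RtoC r : Cconj (RtoC r) = RtoC r.
Proof. apply C_ext; unfold Cconj, RtoC; simpl; ring. Qed.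
Lemma Cconj_0 : Cconj C0 = C0.
Proof. apply C_ext; unfold Cconj, C0; simpl; ring. Qed.
Lemma Cconj_1 : Cconj C1 = C1.
Proof. apply C_ext; unfold Cconj, C1; simpl; ring. Qed.
Lemma fst_Cadd a b : fst (Cadd a b) = fst a + fst b. Proof. reflexivity. Qed.
Lemma fst_RtoC_mul r a : fst (Cmul (RtoC r) a) = r * fst a.
Proof. unfold Cmul, RtoC; simpl; ring. Qed.
Lemma fst_conj_mul a : fst (Cmul (Cconj a) a) = fst a * fst a + snd a * snd a.
Proof. unfold Cmul, Cconj; simpl; ring. Qed.
Lemma snd_conj_mul a : snd (Cmul (Cconj a) a) = 0.
Proof. unfold Cmul, Cconj; simpl; ring. Qed.

Lemma csum_ext n f g : (forall i, (i < n)%nat -> f i = g i) -> csum n f = csum n g.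
Proof.
  induction n; intros H; simpl; [reflexivity|].
  rewrite IHn by (intros; apply H; lia). rewrite H by lia. reflexivity.
Qed.

Lemma csum_add n f g : csum n (fun i => Cadd (f i) (g i)) = Cadd (csum n f) (csum n g).
Proof. induction n; simpl. apply C_ext; simpl; ring. rewrite IHn; ring. Qed.

Lemma csum_mull n c f : csum n (fun i => Cmul c (f i)) = Cmul c (csum n f).
Proof. induction n; simpl. apply C_ext; unfold Cmul; simpl; ring. rewrite IHn; ring. Qed.

Lemma csum_mulr n c f : csum n (fun i => Cmul (f i) c) = Cmul (csum n f) c.
Proof. induction n; simpl. apply C_ext; unfold Cmul; simpl; ring. rewrite IHn; ring. Qed.

Lemma csum_zero n f : (forall i, (i < n)%nat -> f i = C0) -> csum n f = C0.
Proof.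
  intros H. rewrite (csum_ext n f (fun _ => C0)) by auto.
  induction n; simpl; [reflexivity|]. rewrite IHn by (intros; apply H; lia). ring.
Qed.

Lemma csum_swap n m (f : nat -> nat -> C) :
  csum n (fun i => csum m (fun j => f i j)) = csum m (fun j => csum n (fun i => f i j)).
Proof.
  induction n; simpl.
  - symmetry; apply csum_zero; reflexivity.
  - rewrite IHn. rewrite <- csum_add. reflexivity.
Qed.

Lemma csum_conj n f : Cconj (csum n f) = csum n (fun i => Cconj (f i)).
Proof. induction n; simpl. apply Cconj_0. rewrite Cconj_add, IHn; reflexivity. Qed.

Definition kd (i j : nat) : C := if Nat.eq_dec i j then C1 else C0.

Lemma csum_delta n j f : (j < n)%nat -> csum n (fun i => Cmul (kd i j) (f i)) = f j.
Proof.
  induction n; intros Hj; [lia|]. simpl.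
  destruct (Nat.eq_dec n j) as [E|E].
  - subst. rewrite csum_zero. unfold kd; destruct Nat.eq_dec; [|lia]. ring.
    intros i Hi; unfold kd; destruct Nat.eq_dec; [lia|]. ring.
  - rewrite IHn by lia. unfold kd; destruct Nat.eq_dec; [lia|]. ring.
Qed.

Lemma csum_delta' n j f : (j < n)%nat -> csum n (fun i => Cmul (kd j i) (f i)) = f j.
Proof.
  intros Hj. rewrite <- (csum_delta n j f Hj). apply csum_ext; intros.
  unfold kd; do 2 destruct Nat.eq_dec; try lia; reflexivity.
Qed.

Fixpoint rsum (n : nat) (f : nat -> R) : R :=
  match n with O => 0 | S m => rsum m f + f m end.

Lemma fst_csum n f : fst (csum n f) = rsum n (fun i => fst (f i)).
Proof. induction n; simpl; [reflexivity|]. rewrite IHn; reflexivity. Qed.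
Lemma snd_csum n f : snd (csum n f) = rsum n (fun i => snd (f i)).
Proof. induction n; simpl; [reflexivity|]. rewrite IHn; reflexivity. Qed.

Lemma rsum_ext n f g : (forall i, (i < n)%nat -> f i = g i) -> rsum n f = rsum n g.
Proof.
  induction n; intros H; simpl; [reflexivity|].
  rewrite IHn by (intros; apply H; lia). rewrite H by lia. reflexivity.
Qed.
Lemma rsum_add n f g : rsum n (fun i => f i + g i) = rsum n f + rsum n g.
Proof. induction n; simpl. ring. rewrite IHn; ring. Qed.
Lemma rsum_scal n c f : rsum n (fun i => c * f i) = c * rsum n f.
Proof. induction n; simpl. ring. rewrite IHn; ring. Qed.
Lemma rsum_le n f g : (forall i, (i < n)%nat -> f i <= g i) -> rsum n f <= rsum n g.
Proof.
  induction n; intros H; simpl; [lra|].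
  assert (rsum n f <= rsum n g) by (apply IHn; intros; apply H; lia).
  assert (f n <= g n) by (apply H; lia). lra.
Qed.
Lemma rsum_nonneg n f : (forall i, (i < n)%nat -> 0 <= f i) -> 0 <= rsum n f.
Proof.
  intros H. replace 0 with (rsum n (fun _ => 0)). apply rsum_le; auto.
  induction n; simpl; [reflexivity|]. rewrite IHn by (intros; apply H; lia). ring.
Qed.
Lemma rsum_zero n f : (forall i, (i < n)%nat -> f i = 0) -> rsum n f = 0.
Proof.
  intros H. induction n; simpl; [reflexivity|]. rewrite IHn by (intros; apply H; lia).
  rewrite H by lia. ring.
Qed.
Lemma rsum_pos n f k : (forall i, (i < n)%nat -> 0 <= f i) -> (k < n)%nat -> 0 < f k ->
  0 < rsum n f.
Proof.
  induction n; intros H Hk Hf; [lia|]. simpl.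
  destruct (Nat.eq_dec k n).
  - subst. assert (0 <= rsum n f) by (apply rsum_nonneg; intros; apply H; lia). lra.
  - assert (0 < rsum n f) by (apply IHn; auto; try lia; intros; apply H; lia).
    assert (0 <= f n) by (apply H; lia). lra.
Qed.
Lemma rsum_delta n k c : (k < n)%nat ->
  rsum n (fun i => if Nat.eq_dec i k then c else 0) = c.
Proof.
  induction n; intros Hk; [lia|]. simpl.
  destruct (Nat.eq_dec n k).
  - subst. rewrite rsum_zero. ring. intros; destruct Nat.eq_dec; [lia|reflexivity].
  - rewrite IHn by lia. ring.
Qed.

From Stdlib Require Import Setoid Morphisms.
#[export] Instance csum_proper n : Proper (pointwise_relation nat eq ==> eq) (csum n).
Proof. intros f g H. apply csum_ext; intros; apply H. Qed.
#[export] Instance rsum_proper n : Proper (pointwise_relation nat eq ==> eq) (rsum n).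
Proof. intros f g H. apply rsum_ext; intros; apply H. Qed.
Ltac push := repeat first [setoid_rewrite <- csum_mull | setoid_rewrite <- csum_mulr].
Ltac cext := repeat (apply csum_ext; intros).
Ltac cext1 := apply csum_ext; intros.


Lemma trace_outer d u A : trace d (mmul d (outer u u) A) = inner d u (mapply d A u).
Proof.
  unfold trace, mmul, outer, inner, mapply.
  setoid_rewrite <- csum_mull.
  rewrite csum_swap. apply csum_ext; intros; apply csum_ext; intros. ring.
Qed.

Lemma trace_spectral d A u f :
  trace d (mmul d A (spectral_sum d u f)) =
  csum d (fun k => Cmul (RtoC (f k)) (inner d (u k) (mapply d A (u k)))).
Proof.
  unfold trace, mmul, spectral_sum, outer, inner, mapply.
  push.
  setoid_rewrite csum_swap at 2.
  rewrite csum_swap.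
  cext. ring.
Qed.

Lemma complete d u i j : orthonormal d u -> (i < d)%nat -> (j < d)%nat ->
  csum d (fun k => Cmul (u k i) (Cconj (u k j))) = kd i j.
Proof. intros; unfold kd; apply MCpart.completeness; auto. Qed.

Lemma expand d u x i : orthonormal d u -> (i < d)%nat ->
  x i = csum d (fun k => Cmul (u k i) (inner d (u k) x)).
Proof.
  intros Hu Hi.
  transitivity (csum d (fun j => Cmul (csum d (fun k => Cmul (u k i) (Cconj (u k j)))) (x j))).
  - rewrite (csum_ext d _ (fun j => Cmul (kd i j) (x j))).
    + symmetry; apply csum_delta'; auto.
    + intros j Hj; rewrite complete; auto.
  - unfold inner. push. rewrite csum_swap. cext. ring.
Qed.

Lemma sum_diag d u A : orthonormal d u ->
  csum d (fun k => inner d (u k) (mapply d A (u k))) = trace d A.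
Proof.
  intros Hu. unfold trace.
  transitivity (csum d (fun i => csum d (fun j => Cmul (A i j)
     (csum d (fun k => Cmul (u k j) (Cconj (u k i))))))).
  - unfold inner, mapply. push. rewrite csum_swap. cext1.
    rewrite csum_swap. cext. ring.
  - cext1. rewrite (csum_ext d _ (fun j => Cmul (kd i j) (A i j))).
    + apply csum_delta'; auto.
    + intros j Hj; rewrite complete; auto. unfold kd; do 2 destruct Nat.eq_dec; try lia; ring.
Qed.

Lemma inner_spectral d u f x :
  inner d x (mapply d (spectral_sum d u f) x) =
  csum d (fun k => Cmul (RtoC (f k)) (Cmul (Cconj (inner d (u k) x)) (inner d (u k) x))).
Proof.
  unfold inner, mapply, spectral_sum, outer.
  setoid_rewrite csum_conj. setoid_rewrite Cconj_mul. setoid_rewrite Cconj_invol.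
  push.
  transitivity (csum d (fun i => csum d (fun k => csum d (fun j =>
      Cmul (Cconj (x i)) (Cmul (Cmul (RtoC (f k)) (Cmul (u k i) (Cconj (u k j)))) (x j)))))).
  - cext1. apply csum_swap.
  - rewrite csum_swap. cext1. rewrite csum_swap. cext. ring.
Qed.

Lemma spectral_herm d u f : hermitian d (spectral_sum d u f).
Proof.
  intros i j Hi Hj. unfold spectral_sum, outer.
  rewrite csum_conj. cext.
  rewrite !Cconj_mul, Cconj_RtoC, Cconj_invol. ring.
Qed.

Lemma Cmul_eq0 a b : Cmul a b = C0 -> a = C0 \/ b = C0.
Proof.
  destruct a as [a1 a2], b as [b1 b2]; unfold Cmul, C0; simpl; intros H.
  injection H; intros H2 H1.
  assert (E : (a1*a1 + a2*a2) * (b1*b1+b2*b2) = 0).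
  { replace ((a1*a1 + a2*a2) * (b1*b1+b2*b2)) with
      ((a1*b1 - a2*b2)*(a1*b1 - a2*b2) + (a1*b2+a2*b1)*(a1*b2+a2*b1)) by ring.
    rewrite H1, H2; ring. }
  apply Rmult_integral in E. destruct E as [E|E]; [left|right].
  - assert (a1 = 0 /\ a2 = 0) by nra. destruct H0 as [-> ->]; reflexivity.
  - assert (b1 = 0 /\ b2 = 0) by nra. destruct H0 as [-> ->]; reflexivity.
Qed.

Lemma spectral_pd d u f : orthonormal d u -> (forall k, (k < d)%nat -> 0 < f k) ->
  pd d (spectral_sum d u f).
Proof.
  intros Hu Hf. split; [apply spectral_herm|].
  intros x [i [Hi Hx]].
  rewrite inner_spectral, fst_csum.
  assert (Hc : exists k, (k < d)%nat /\ inner d (u k) x <> C0).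
  { apply Classical_Prop.NNPP; intros Hn. apply Hx.
    rewrite (expand d u x i Hu Hi). apply csum_zero; intros k Hk.
    destruct (Classical_Prop.classic (inner d (u k) x = C0)) as [E|E].
    - rewrite E; ring.
    - exfalso; apply Hn; exists k; auto. }
  destruct Hc as [k [Hk Hck]].
  apply rsum_pos with k; auto.
  - intros j Hj. rewrite fst_RtoC_mul, fst_conj_mul.
    specialize (Hf j Hj). nra.
  - rewrite fst_RtoC_mul, fst_conj_mul. specialize (Hf k Hk).
    destruct (inner d (u k) x) as [a b]; simpl.
    assert (a <> 0 \/ b <> 0).
    { destruct (Req_dec a 0), (Req_dec b 0); auto. subst. exfalso; apply Hck; reflexivity. }
    assert (0 < a*a + b*b) by (destruct H; nra). nra.
Qed.

Lemma ortho_family d u : orthonormal d u -> proj_family d (fun k => outer (u k) (u k)).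
Proof.
  intros Hu. split.
  - intros i Hi. exists (u i). split.
    + rewrite Hu by auto. destruct Nat.eq_dec; [reflexivity|lia].
    + intros a b _ _; reflexivity.
  - intros i j Hi Hj Hij a b Ha Hb. unfold mmul, outer.
    transitivity (Cmul (Cmul (u i a) (inner d (u i) (u j))) (Cconj (u j b))).
    + unfold inner. push. cext. ring.
    + rewrite Hu by auto. destruct Nat.eq_dec; [lia|]. ring.
Qed.

Lemma unit_nonzero d v : inner d v v = C1 -> exists a, (a < d)%nat /\ v a <> C0.
Proof.
  intros H. apply Classical_Prop.NNPP; intros Hn.
  assert (inner d v v = C0).
  { apply csum_zero; intros a Ha.
    destruct (Classical_Prop.classic (v a = C0)) as [E|E].
    - rewrite E; ring.
    - exfalso; apply Hn; exists a; auto. }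
  rewrite H in H0. unfold C1, C0 in H0. injection H0; lra.
Qed.

From Stdlib Require Import ClassicalEpsilon.

Lemma family_ortho d P : proj_family d P ->
  exists u, orthonormal d u /\ forall k, (k < d)%nat -> meq d (P k) (outer (u k) (u k)).
Proof.
  intros [H1 H2].
  set (u := fun k => epsilon (inhabits (fun _ : nat => C0))
          (fun v => inner d v v = C1 /\ meq d (P k) (outer v v))).
  assert (Hu : forall k, (k < d)%nat -> inner d (u k) (u k) = C1 /\ meq d (P k) (outer (u k) (u k))).
  { intros k Hk. unfold u. apply epsilon_spec. destruct (H1 k Hk) as [v Hv]. exists v; auto. }
  exists u. split; [|intros k Hk; apply Hu; auto].
  intros i j Hi Hj. destruct Nat.eq_dec as [E|E].
  - subst; apply Hu; auto.
  - destruct (unit_nonzero d (u i) (proj1 (Hu i Hi))) as [a [Ha Hua]].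
    destruct (unit_nonzero d (u j) (proj1 (Hu j Hj))) as [b [Hb Hub]].
    specialize (H2 i j Hi Hj E a b Ha Hb). unfold mmul in H2.
    rewrite (csum_ext d _ (fun c => Cmul (outer (u i) (u i) a c) (outer (u j) (u j) c b))) in H2.
    2: { intros c Hc. rewrite (proj2 (Hu i Hi)) by auto. rewrite (proj2 (Hu j Hj)) by auto. reflexivity. }
    assert (E2 : Cmul (Cmul (u i a) (inner d (u i) (u j))) (Cconj (u j b)) = C0).
    { rewrite <- H2. unfold inner, outer. push. cext. ring. }
    apply Cmul_eq0 in E2. destruct E2 as [E2|E2].
    + apply Cmul_eq0 in E2. destruct E2 as [E2|E2]; [contradiction|exact E2].
    + exfalso. apply Hub. rewrite <- (Cconj_invol (u j b)), E2. apply Cconj_0.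
Qed.

Definition pk d (A : Mat) (u : nat -> Vec) k := fst (inner d (u k) (mapply d A (u k))).
Definition gval d rho sigma u := Esum d (fun k => rel_term (pk d rho u k) (pk d sigma u k)).

Lemma Esum_ext n f g : (forall i, (i < n)%nat -> f i = g i) -> Esum n f = Esum n g.
Proof.
  induction n; intros H; simpl; [reflexivity|].
  rewrite IHn by (intros; apply H; lia). rewrite H by lia. reflexivity.
Qed.

Lemma trace_meq d A A' B : meq d A A' -> trace d (mmul d A B) = trace d (mmul d A' B).
Proof. intros H. unfold trace, mmul. cext1. cext1. rewrite H by auto. reflexivity. Qed.

Lemma DP_set_iff d rho sigma y :
  DP_set d rho sigma y <-> exists u, orthonormal d u /\ y = gval d rho sigma u.
Proof.
  split.
  - intros [P [HP ->]]. destruct (family_ortho d P HP) as [u [Hu HPu]].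
    exists u; split; auto. unfold meas_value, gval. apply Esum_ext; intros k Hk.
    unfold pk. rewrite !(trace_meq d (P k) (outer (u k) (u k))) by auto.
    rewrite !trace_outer. reflexivity.
  - intros [u [Hu ->]]. exists (fun k => outer (u k) (u k)). split.
    + apply ortho_family; auto.
    + unfold meas_value, gval. apply Esum_ext; intros k Hk. unfold pk.
      rewrite !trace_outer. reflexivity.
Qed.


Lemma ln_le_sub1 x : 0 < x -> ln x <= x - 1.
Proof. intros Hx. pose proof (exp_ineq1_le (ln x)). rewrite exp_ln in H by auto. lra. Qed.

Lemma Ele_refl x : Ele x x.
Proof. destruct x; simpl; auto; lra. Qed.
Lemma Ele_trans x y z : Ele x y -> Ele y z -> Ele x z.
Proof. destruct x, y, z; simpl; auto; try lra; tauto. Qed.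
Lemma Eadd_le a b c e : Ele a b -> Ele c e -> b <> MInf -> e <> MInf -> a <> PInf -> c <> PInf ->
  Ele (Eadd a c) (Eadd b e).
Proof. destruct a, b, c, e; simpl; intros; auto; try lra; try congruence. Qed.

Lemma Esum_le n g f : (forall k, (k < n)%nat -> Ele (Fin (g k)) (f k)) ->
  (forall k, (k < n)%nat -> f k <> MInf) ->
  Ele (Fin (rsum n g)) (Esum n f).
Proof.
  induction n; intros H1 H2; simpl; [lra|].
  change (Ele (Eadd (Fin (rsum n g)) (Fin (g n))) (Eadd (Esum n f) (f n))).
  apply Eadd_le.
  - apply IHn; intros; [apply H1|apply H2]; lia.
  - apply H1; lia.
  - clear IHn H1. induction n; simpl; [discriminate|].
    assert (Esum n f <> MInf) by (apply IHn; intros; apply H2; lia).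
    assert (f n <> MInf) by (apply H2; lia).
    destruct (Esum n f), (f n); simpl; congruence.
  - apply H2; lia.
  - discriminate.
  - discriminate.
Qed.

Lemma Esum_fin n f g : (forall k, (k < n)%nat -> f k = Fin (g k)) -> Esum n f = Fin (rsum n g).
Proof.
  induction n; intros H; simpl; [reflexivity|].
  rewrite IHn by (intros; apply H; lia). rewrite H by lia. reflexivity.
Qed.

Lemma Esum_pinf n f k : (forall i, (i < n)%nat -> f i <> MInf) -> (k < n)%nat -> f k = PInf ->
  Esum n f = PInf.
Proof.
  induction n; intros H Hk Hf; [lia|]. simpl.
  destruct (Nat.eq_dec k n).
  - subst. rewrite Hf. destruct (Esum n f); reflexivity.
  - rewrite IHn by (auto; try lia; intros; apply H; lia). reflexivity.
Qed.

Lemma rel_term_not_minf p q : rel_term p q <> MInf.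
Proof. unfold rel_term; repeat destruct Req_EM_T; discriminate. Qed.

Lemma rsum_one_pos n p : rsum n p = 1 -> exists k, (k < n)%nat /\ 0 < p k.
Proof.
  intros H. apply Classical_Prop.NNPP; intros Hn.
  assert (rsum n p <= rsum n (fun _ => 0)).
  { apply rsum_le; intros k Hk. apply Rnot_lt_le; intros Hp; apply Hn; exists k; auto. }
  rewrite (rsum_zero n (fun _ => 0)) in H0 by auto. lra.
Qed.

Lemma core2 n p q lam :
  (forall k, (k < n)%nat -> 0 <= p k) -> (forall k, (k < n)%nat -> 0 <= q k) ->
  (forall k, (k < n)%nat -> 0 < lam k) -> rsum n p = 1 ->
  Ele (Fin (rsum n (fun k => ln (lam k) * p k) + 1 - rsum n (fun k => lam k * q k)))
      (Esum n (fun k => rel_term (p k) (q k))).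
Proof.
  intros Hp Hq Hl Hs.
  replace (rsum n (fun k => ln (lam k) * p k) + 1 - rsum n (fun k => lam k * q k))
    with (rsum n (fun k => ln (lam k) * p k + (- (lam k * q k) + p k))).
  2: { rewrite !rsum_add, Hs.
       rewrite (rsum_ext n (fun k => - (lam k * q k)) (fun k => -1 * (lam k * q k))) by (intros; ring).
       rewrite rsum_scal. ring. }
  apply Esum_le; [|intros; apply rel_term_not_minf].
  intros k Hk. specialize (Hp k Hk); specialize (Hq k Hk); specialize (Hl k Hk).
  unfold rel_term. destruct Req_EM_T as [E|E].
  - simpl. rewrite E. nra.
  - destruct Req_EM_T as [E2|E2]; [simpl; auto|]. simpl.
    assert (0 < p k) by lra. assert (0 < q k) by lra.
    assert (ln (lam k * q k / p k) <= lam k * q k / p k - 1) by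
      (apply ln_le_sub1; apply Rdiv_lt_0_compat; nra).
    unfold Rdiv in *. rewrite !ln_mult in H1; try nra; try (apply Rinv_0_lt_compat; nra).
    rewrite ln_mult by (try apply Rinv_0_lt_compat; lra).
    rewrite !ln_Rinv in * by lra.
    apply Rmult_le_compat_l with (r := p k) in H1; [|lra].
    replace (p k * (lam k * q k * / p k - 1)) with (lam k * q k - p k) in H1 by (field; lra).
    nra.
Qed.

Lemma core1 n p q lam :
  (forall k, (k < n)%nat -> 0 <= p k) -> (forall k, (k < n)%nat -> 0 <= q k) ->
  (forall k, (k < n)%nat -> 0 < lam k) -> rsum n p = 1 ->
  Ele (Fin (rsum n (fun k => ln (lam k) * p k) - ln (rsum n (fun k => lam k * q k))))
      (Esum n (fun k => rel_term (p k) (q k))).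
Proof.
  intros Hp Hq Hl Hs.
  set (S := rsum n (fun k => lam k * q k)).
  assert (HS : 0 <= S) by (apply rsum_nonneg; intros; specialize (Hq i H); specialize (Hl i H); nra).
  destruct (Rle_lt_or_eq_dec 0 S HS) as [HSp|HS0].
  - pose proof (core2 n p q (fun k => lam k / S) Hp Hq) as H.
    assert (Hl' : forall k, (k < n)%nat -> 0 < lam k / S) by
      (intros; apply Rdiv_lt_0_compat; auto).
    specialize (H Hl' Hs). cbv beta in H.
    replace (rsum n (fun k => lam k / S * q k)) with 1 in H.
    2: { unfold Rdiv. rewrite (rsum_ext n _ (fun k => / S * (lam k * q k))) by (intros; ring).
         rewrite rsum_scal. fold S. field. lra. }
    replace (rsum n (fun k => ln (lam k / S) * p k)) with
      (rsum n (fun k => ln (lam k) * p k) - ln S) in H. 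
    + replace (rsum n (fun k => ln (lam k) * p k) - ln S + 1 - 1) with
        (rsum n (fun k => ln (lam k) * p k) - ln S) in H by ring. exact H.
    + rewrite (rsum_ext n (fun k => ln (lam k / S) * p k) (fun k => ln (lam k) * p k + (- ln S) * p k)).
      * rewrite rsum_add, rsum_scal, Hs. ring.
      * intros k Hk. unfold Rdiv. rewrite ln_mult, ln_Rinv; auto. ring.
        apply Rinv_0_lt_compat; auto.
  - destruct (rsum_one_pos n p Hs) as [k [Hk Hpk]].
    assert (Hqk : q k = 0).
    { apply Classical_Prop.NNPP; intros Hne.
      assert (0 < S). { apply rsum_pos with k; auto.
        intros; specialize (Hq i H); specialize (Hl i H); nra.
        specialize (Hq k Hk); specialize (Hl k Hk). nra. } lra. }
    rewrite (Esum_pinf n _ k); auto. simpl; auto.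
    intros; apply rel_term_not_minf.
    unfold rel_term. destruct Req_EM_T; [lra|]. destruct Req_EM_T; [reflexivity|contradiction].
Qed.


Lemma trace_meq_r d A B B' : meq d B B' -> trace d (mmul d A B) = trace d (mmul d A B').
Proof. intros H. unfold trace, mmul. cext1. cext1. rewrite H by auto. reflexivity. Qed.

Lemma fst_trace_spectral d A u f :
  fst (trace d (mmul d A (spectral_sum d u f))) = rsum d (fun k => f k * pk d A u k).
Proof.
  rewrite trace_spectral, fst_csum. apply rsum_ext; intros. rewrite fst_RtoC_mul; reflexivity.
Qed.

Lemma pk_sum d rho u : density d rho -> orthonormal d u -> rsum d (fun k => pk d rho u k) = 1.
Proof.
  intros [_ Ht] Hu. unfold pk. rewrite <- fst_csum, sum_diag, Ht by auto. reflexivity.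
Qed.

Lemma pk_nonneg d A u k : psd d A -> 0 <= pk d A u k.
Proof. intros [_ H]. apply H. Qed.

Lemma var1_eq d rho sigma w L u lam :
  meq d w (spectral_sum d u lam) -> meq d L (spectral_sum d u (fun k => ln (lam k))) ->
  var1 d rho sigma w L = rsum d (fun k => ln (lam k) * pk d rho u k)
     - ln (rsum d (fun k => lam k * pk d sigma u k)).
Proof.
  intros Hw HL. unfold var1.
  rewrite (trace_meq_r d rho L _ HL), (trace_meq_r d sigma w _ Hw), !fst_trace_spectral.
  reflexivity.
Qed.

Lemma var2_eq d rho sigma w L u lam :
  meq d w (spectral_sum d u lam) -> meq d L (spectral_sum d u (fun k => ln (lam k))) ->
  var2 d rho sigma w L = rsum d (fun k => ln (lam k) * pk d rho u k) + 1
     - rsum d (fun k => lam k * pk d sigma u k).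
Proof.
  intros Hw HL. unfold var2.
  rewrite (trace_meq_r d rho L _ HL), (trace_meq_r d sigma w _ Hw), !fst_trace_spectral.
  reflexivity.
Qed.

Lemma set1_below d rho sigma y : density d rho -> psd d sigma -> set1 d rho sigma y ->
  exists u, orthonormal d u /\ Ele y (gval d rho sigma u).
Proof.
  intros Hr Hs [w [L [Hw [[u [lam [Hu [Hl [Hw' HL']]]]] ->]]]].
  exists u; split; auto. rewrite (var1_eq _ _ _ _ _ u lam) by auto.
  apply core1; auto.
  - intros; apply pk_nonneg; apply Hr.
  - intros; apply pk_nonneg; auto.
  - apply pk_sum; auto.
Qed.

Lemma set2_below d rho sigma y : density d rho -> psd d sigma -> set2 d rho sigma y ->
  exists u, orthonormal d u /\ Ele y (gval d rho sigma u).
Proof.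
  intros Hr Hs [w [L [Hw [[u [lam [Hu [Hl [Hw' HL']]]]] ->]]]].
  exists u; split; auto. rewrite (var2_eq _ _ _ _ _ u lam) by auto.
  apply core2; auto.
  - intros; apply pk_nonneg; apply Hr.
  - intros; apply pk_nonneg; auto.
  - apply pk_sum; auto.
Qed.

Lemma build d rho sigma u lam : orthonormal d u -> (forall k, (k < d)%nat -> 0 < lam k) ->
  set1 d rho sigma (Fin (rsum d (fun k => ln (lam k) * pk d rho u k)
     - ln (rsum d (fun k => lam k * pk d sigma u k)))) /\
  set2 d rho sigma (Fin (rsum d (fun k => ln (lam k) * pk d rho u k) + 1
     - rsum d (fun k => lam k * pk d sigma u k))) /\
  exists w L, pd d w /\ mat_log d w L /\
   var1 d rho sigma w L = rsum d (fun k => ln (lam k) * pk d rho u k)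
     - ln (rsum d (fun k => lam k * pk d sigma u k)) /\
   var2 d rho sigma w L = rsum d (fun k => ln (lam k) * pk d rho u k) + 1
     - rsum d (fun k => lam k * pk d sigma u k).
Proof.
  intros Hu Hl.
  set (w := spectral_sum d u lam). set (L := spectral_sum d u (fun k => ln (lam k))).
  assert (Hw : pd d w) by (apply spectral_pd; auto).
  assert (HL : mat_log d w L) by (exists u, lam; repeat split; auto; intros ? ? ? ?; reflexivity).
  assert (E1 := var1_eq d rho sigma w L u lam (fun _ _ _ _ => eq_refl) (fun _ _ _ _ => eq_refl)).
  assert (E2 := var2_eq d rho sigma w L u lam (fun _ _ _ _ => eq_refl) (fun _ _ _ _ => eq_refl)).
  split; [|split].
  - exists w, L; split; [auto|split; [auto|]]. rewrite E1; reflexivity.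
  - exists w, L; split; [auto|split; [auto|]]. rewrite E2; reflexivity.
  - exists w, L; split; [auto|split; [auto|split; auto]].
Qed.

Lemma limA1 D Q z : 0 <= Q -> (forall e, 0 < e -> Ele (Fin (D - ln (1 + e * Q))) z) -> Ele (Fin D) z.
Proof.
  intros HQ H. destruct z as [zz| |]; simpl; auto.
  - apply Rnot_lt_le; intros Hlt.
    set (e := (D - zz) / (2 * (Q + 1))).
    assert (He : 0 < e) by (unfold e; apply Rdiv_lt_0_compat; lra).
    specialize (H e He); simpl in H.
    assert (ln (1 + e * Q) <= e * Q).
    { assert (0 < 1 + e * Q) by nra. pose proof (ln_le_sub1 (1 + e*Q) H0). lra. }
    assert (e * Q < D - zz).
    { apply Rmult_lt_reg_r with (2 * (Q + 1)); [lra|].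
      replace (e * Q * (2 * (Q + 1))) with ((D - zz) * Q) by (unfold e; field; lra). nra. }
    lra.
  - specialize (H 1 Rlt_0_1); simpl in H; auto.
Qed.

Lemma limA2 D Q z : 0 <= Q -> (forall e, 0 < e -> Ele (Fin (D - e * Q)) z) -> Ele (Fin D) z.
Proof.
  intros HQ H. destruct z as [zz| |]; simpl; auto.
  - apply Rnot_lt_le; intros Hlt.
    set (e := (D - zz) / (2 * (Q + 1))).
    assert (He : 0 < e) by (unfold e; apply Rdiv_lt_0_compat; lra).
    specialize (H e He); simpl in H.
    assert (e * Q < D - zz).
    { apply Rmult_lt_reg_r with (2 * (Q + 1)); [lra|].
      replace (e * Q * (2 * (Q + 1))) with ((D - zz) * Q) by (unfold e; field; lra). nra. }
    lra.
  - specialize (H 1 Rlt_0_1); simpl in H; auto.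
Qed.

Lemma limB p0 c z : 0 < p0 -> (forall t, Ele (Fin (t * p0 + c)) z) -> z = PInf.
Proof.
  intros Hp H. destruct z as [zz| |]; auto.
  - specialize (H ((zz - c + 1) / p0)). simpl in H.
    replace ((zz - c + 1) / p0 * p0 + c) with (zz + 1) in H by (field; lra). lra.
  - specialize (H 0). simpl in H. contradiction.
Qed.

Definition rterm (p q : R) : R := if Req_EM_T p 0 then 0 else p * ln (p / q).

Lemma DP_below d rho sigma u z (which : bool) : density d rho -> psd d sigma -> orthonormal d u ->
  (forall y, (if which then set1 d rho sigma y else set2 d rho sigma y) -> Ele y z) ->
  Ele (gval d rho sigma u) z.
Proof.
  intros Hr Hs Hu Hz.
  set (p := pk d rho u). set (q := pk d sigma u).
  assert (Hp : forall k, 0 <= p k) by (intros; apply pk_nonneg; apply Hr).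
  assert (Hq : forall k, 0 <= q k) by (intros; apply pk_nonneg; auto).
  assert (Hps : rsum d p = 1) by (apply pk_sum; auto).
  destruct (Classical_Prop.classic (exists k, (k < d)%nat /\ p k <> 0 /\ q k = 0))
    as [[k0 [Hk0 [Hp0 Hq0]]] | Hno].
  -
    assert (HG : gval d rho sigma u = PInf).
    { unfold gval. apply Esum_pinf with k0; auto. intros; apply rel_term_not_minf.
      fold p q. unfold rel_term. destruct Req_EM_T; [contradiction|].
      destruct Req_EM_T; [reflexivity|contradiction]. }
    rewrite HG.
    assert (Hpos : 0 < p k0) by (specialize (Hp k0); lra).
    set (Qt := rsum d q).
    assert (Hall : forall t, Ele (Fin (t * p k0 + (if which then - ln Qt else 1 - Qt))) z).
    { intros t.
      set (lam := fun k => if Nat.eq_dec k k0 then exp t else 1).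
      assert (Hl : forall k, (k < d)%nat -> 0 < lam k).
      { intros k _; unfold lam; destruct Nat.eq_dec; [apply exp_pos|lra]. }
      destruct (build d rho sigma u lam Hu Hl) as [B1 [B2 _]].
      fold p q in B1, B2.
      assert (E1 : rsum d (fun k => ln (lam k) * p k) = t * p k0).
      { rewrite <- (rsum_delta d k0 (t * p k0)) by auto. apply rsum_ext; intros k Hk.
        unfold lam; destruct Nat.eq_dec. subst; rewrite ln_exp; ring. rewrite ln_1; ring. }
      assert (E2 : rsum d (fun k => lam k * q k) = Qt).
      { apply rsum_ext; intros k Hk. unfold lam; destruct Nat.eq_dec. subst; rewrite Hq0; ring. ring. }
      rewrite E1, E2 in B1, B2.
      destruct which.
      - apply Hz. replace (t * p k0 + - ln Qt) with (t * p k0 - ln Qt) by ring. exact B1.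
      - apply Hz. replace (t * p k0 + (1 - Qt)) with (t * p k0 + 1 - Qt) by ring. exact B2. }
    rewrite (limB (p k0) _ z Hpos Hall). simpl; auto.
  -
    assert (HA : forall k, (k < d)%nat -> p k <> 0 -> q k <> 0).
    { intros k Hk H1 H2. apply Hno. exists k; auto. }
    set (D := rsum d (fun k => rterm (p k) (q k))).
    set (Q := rsum d (fun k => if Req_EM_T (p k) 0 then q k else 0)).
    assert (HQ : 0 <= Q) by (apply rsum_nonneg; intros; destruct Req_EM_T; auto; lra).
    assert (HG : gval d rho sigma u = Fin D).
    { unfold gval. apply Esum_fin. intros k Hk. fold p q. unfold rel_term, rterm.
      destruct Req_EM_T; [reflexivity|]. destruct Req_EM_T; [exfalso; eapply HA; eauto|reflexivity]. }
    rewrite HG.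
    assert (Hall : forall e, 0 < e -> Ele (Fin (if which then D - ln (1 + e * Q) else D - e * Q)) z).
    { intros e He.
      set (lam := fun k => if Req_EM_T (p k) 0 then e else p k / q k).
      assert (Hl : forall k, (k < d)%nat -> 0 < lam k).
      { intros k Hk; unfold lam; destruct Req_EM_T; auto.
        apply Rdiv_lt_0_compat. specialize (Hp k); lra.
        specialize (Hq k); specialize (HA k Hk n); lra. }
      destruct (build d rho sigma u lam Hu Hl) as [B1 [B2 _]].
      fold p q in B1, B2.
      assert (E1 : rsum d (fun k => ln (lam k) * p k) = D).
      { apply rsum_ext; intros k Hk. unfold lam, rterm; destruct Req_EM_T. rewrite e0; ring. ring. }
      assert (E2 : rsum d (fun k => lam k * q k) = 1 + e * Q).
      { rewrite <- Hps. unfold Q. rewrite <- rsum_scal, <- rsum_add. apply rsum_ext; intros k Hk.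
        unfold lam; destruct Req_EM_T. rewrite e0; ring. field. apply HA; auto. }
      rewrite E1, E2 in B1, B2.
      destruct which.
      - apply Hz. exact B1.
      - apply Hz. replace (D - e * Q) with (D + 1 - (1 + e * Q)) by ring. exact B2. }
    destruct which.
    + apply limA1 with Q; auto.
    + apply limA2 with Q; auto.
Qed.


Lemma inner_scale d A c x :
  inner d (fun i => Cmul c (x i)) (mapply d A (fun i => Cmul c (x i))) =
  Cmul (Cmul (Cconj c) c) (inner d x (mapply d A x)).
Proof. unfold inner, mapply. setoid_rewrite Cconj_mul. push. cext. ring. Qed.

Lemma herm_inner d A x y : hermitian d A -> inner d x (mapply d A y) = Cconj (inner d y (mapply d A x)).
Proof.
  intros H. unfold inner, mapply. rewrite csum_conj. setoid_rewrite Cconj_mul.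
  setoid_rewrite csum_conj. setoid_rewrite Cconj_mul.
  push. rewrite csum_swap. cext1. cext1. rewrite (H i0 i) by auto.
  rewrite Cconj_invol. ring.
Qed.

Lemma inner_expand d A x y t :
  inner d (fun i => Cadd (x i) (Cmul (RtoC t) (y i)))
          (mapply d A (fun i => Cadd (x i) (Cmul (RtoC t) (y i)))) =
  Cadd (Cadd (inner d x (mapply d A x))
             (Cmul (RtoC t) (Cadd (inner d x (mapply d A y)) (inner d y (mapply d A x)))))
       (Cmul (Cmul (RtoC t) (RtoC t)) (inner d y (mapply d A y))).
Proof.
  unfold inner, mapply. push.
  transitivity (csum d (fun i => csum d (fun j =>
    Cadd (Cadd (Cadd (Cmul (Cconj (x i)) (Cmul (A i j) (x j)))
      (Cmul (RtoC t) (Cmul (Cconj (x i)) (Cmul (A i j) (y j)))))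
      (Cmul (RtoC t) (Cmul (Cconj (y i)) (Cmul (A i j) (x j)))))
      (Cmul (Cmul (RtoC t) (RtoC t)) (Cmul (Cconj (y i)) (Cmul (A i j) (y j))))))).
  - cext. rewrite Cconj_add, Cconj_mul, Cconj_RtoC. ring.
  - repeat setoid_rewrite csum_add. repeat setoid_rewrite csum_mull. ring.
Qed.

Lemma fst_conj x : fst (Cconj x) = fst x. Proof. reflexivity. Qed.

Lemma normsq_zero d y : fst (inner d y y) = 0 -> forall i, (i < d)%nat -> y i = C0.
Proof.
  intros H i Hi. unfold inner in H. rewrite fst_csum in H.
  destruct (Classical_Prop.classic (y i = C0)) as [E|E]; auto. exfalso.
  assert (0 < rsum d (fun i => fst (Cmul (Cconj (y i)) (y i)))).
  { apply rsum_pos with i; auto.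
    - intros j _. rewrite fst_conj_mul. nra.
    - rewrite fst_conj_mul. destruct (y i) as [a b]. simpl.
      assert (a <> 0 \/ b <> 0).
      { destruct (Req_dec a 0), (Req_dec b 0); auto. subst. exfalso; apply E; reflexivity. }
      destruct H0; nra. }
  lra.
Qed.

Lemma psd_kernel d A x : psd d A -> fst (inner d x (mapply d A x)) = 0 ->
  forall i, (i < d)%nat -> mapply d A x i = C0.
Proof.
  intros [Hh Hp] H0. set (y := mapply d A x).
  set (b := fst (inner d y y)). set (c := fst (inner d y (mapply d A y))).
  assert (Hc : 0 <= c) by apply Hp.
  assert (Hb : 0 <= b) by (unfold b, inner; rewrite fst_csum; apply rsum_nonneg; intros;
    rewrite fst_conj_mul; nra).
  assert (Ht : forall t, 0 <= 2 * t * b + t * t * c).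
  { intros t. pose proof (Hp (fun i => Cadd (x i) (Cmul (RtoC t) (y i)))) as Hq.
    rewrite inner_expand in Hq. rewrite (herm_inner d A x y Hh) in Hq.
    unfold Cadd, Cmul, RtoC, Cconj in Hq. simpl in Hq. fold y in Hq.
    unfold b, c. fold y in H0 |- *. rewrite H0 in Hq. nra. }
  assert (b = 0).
  { specialize (Ht (- b / (c + 1))).
    assert (2 * (- b / (c + 1)) * b + - b / (c + 1) * (- b / (c + 1)) * c
        = - (b * b * (c + 2)) * / ((c + 1) * (c + 1))) by (field; lra).
    rewrite H in Ht.
    assert (0 < / ((c + 1) * (c + 1))) by (apply Rinv_0_lt_compat; nra).
    assert (b * b * (c + 2) <= 0) by nra.
    nra. }
  apply normsq_zero; auto.
Qed.

Lemma Cconj_opp a : Cconj (Copp a) = Copp (Cconj a).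
Proof. apply C_ext; unfold Cconj, Copp; simpl; ring. Qed.

Lemma Cconj_kd i j : Cconj (kd i j) = kd i j.
Proof. unfold kd; destruct Nat.eq_dec; [apply Cconj_1|apply Cconj_0]. Qed.

Lemma householder d y : (0 < d)%nat -> fst (inner d y y) = 1 -> snd (y 0%nat) = 0 ->
  fst (y 0%nat) <= 0 ->
  exists u, orthonormal d u /\ forall i, (i < d)%nat -> u 0%nat i = y i.
Proof.
  intros Hd Hn Hs Hr.
  set (r := fst (y 0%nat)).
  set (w := fun i => Csub (kd i 0) (y i)).
  set (al := / (1 - r)).
  assert (Hyy : inner d y y = RtoC 1).
  { apply C_ext; [exact Hn|]. unfold inner. rewrite snd_csum. simpl. apply rsum_zero.
    intros; apply snd_conj_mul. }
  assert (Hy0 : y 0%nat = RtoC r) by (apply C_ext; simpl; auto).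
  assert (Hww : inner d w w = RtoC (2 - 2 * r)).
  { transitivity (csum d (fun i => Cadd (Cadd (Cadd (Cmul (kd i 0) (kd i 0))
       (Cmul (Copp C1) (Cmul (kd i 0) (y i))))
       (Cmul (Copp C1) (Cmul (kd i 0) (Cconj (y i))))) (Cmul (Cconj (y i)) (y i)))).
    - unfold inner, w. cext. unfold Csub. rewrite Cconj_add, Cconj_opp, Cconj_kd. ring.
    - repeat setoid_rewrite csum_add. repeat setoid_rewrite csum_mull.
      rewrite !(csum_delta d 0) by auto. change (csum d (fun i => Cmul (Cconj (y i)) (y i))) with (inner d y y).
      rewrite Hyy, Hy0. unfold kd; destruct Nat.eq_dec; [|lia].
      apply C_ext; simpl; ring. }
  assert (Hr1 : 0 < 1 - r) by (unfold r; lra).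
  assert (Hal : Cadd (Cadd (RtoC (- al)) (RtoC (- al))) (Cmul (RtoC (al * al)) (RtoC (2 - 2 * r))) = C0).
  { apply C_ext; unfold al; simpl; field; lra. }
  assert (Hal2 : Cmul (RtoC al) (RtoC (1 - r)) = C1).
  { apply C_ext; unfold al; simpl; field; lra. }
  assert (Hw0 : w 0%nat = RtoC (1 - r)).
  { unfold w. rewrite Hy0. unfold kd; destruct Nat.eq_dec; [|lia]. apply C_ext; unfold Csub; simpl; ring. }
  exists (fun k i => Csub (kd i k) (Cmul (RtoC al) (Cmul (w i) (Cconj (w k))))).
  split.
  - intros k l Hk Hl.
    transitivity (csum d (fun i => Cadd (Cadd (Cadd (Cmul (kd i k) (kd i l))
       (Cmul (Cmul (RtoC (- al)) (Cconj (w l))) (Cmul (kd i k) (w i))))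
       (Cmul (Cmul (RtoC (- al)) (w k)) (Cmul (kd i l) (Cconj (w i)))))
       (Cmul (Cmul (RtoC (al * al)) (Cmul (w k) (Cconj (w l)))) (Cmul (Cconj (w i)) (w i))))).
    + unfold inner. cext. unfold Csub.
      rewrite !Cconj_add, !Cconj_opp, !Cconj_mul, Cconj_kd, Cconj_RtoC, Cconj_invol.
      apply C_ext; unfold Cadd, Cmul, Copp, RtoC; simpl; ring.
    + repeat setoid_rewrite csum_add. repeat setoid_rewrite csum_mull.
      rewrite (csum_delta d k (fun i => kd i l)) by auto.
      rewrite (csum_delta d k (fun i => w i)) by auto.
      rewrite (csum_delta d l (fun i => Cconj (w i))) by auto.
      change (csum d (fun i => Cmul (Cconj (w i)) (w i))) with (inner d w w). rewrite Hww.
      transitivity (Cadd (kd k l) (Cmul (Cmul (w k) (Cconj (w l)))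
        (Cadd (Cadd (RtoC (- al)) (RtoC (- al))) (Cmul (RtoC (al * al)) (RtoC (2 - 2 * r)))))).
      * ring.
      * rewrite Hal. unfold kd; destruct Nat.eq_dec; ring.
  - intros i Hi. simpl. rewrite Hw0, Cconj_RtoC.
    transitivity (Csub (kd i 0) (Cmul (w i) (Cmul (RtoC al) (RtoC (1 - r))))); [ring|].
    rewrite Hal2. unfold w, Csub. ring.
Qed.

Lemma quad_ext d A v v' : (forall i, (i < d)%nat -> v i = v' i) ->
  inner d v (mapply d A v) = inner d v' (mapply d A v').
Proof.
  intros H. unfold inner, mapply. cext1. rewrite H by auto. f_equal. cext1. rewrite H by auto. reflexivity.
Qed.

Lemma inner_scale2 d c x :
  inner d (fun i => Cmul c (x i)) (fun i => Cmul c (x i)) = Cmul (Cmul (Cconj c) c) (inner d x x).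
Proof. unfold inner. setoid_rewrite Cconj_mul. push. cext. ring. Qed.

Lemma fst_normmul c z : fst (Cmul (Cmul (Cconj c) c) z) = fst (Cmul (Cconj c) c) * fst z - 0 * snd z.
Proof. rewrite <- (snd_conj_mul c). reflexivity. Qed.

Lemma normsq_pos d x i : (i < d)%nat -> x i <> C0 -> 0 < fst (inner d x x).
Proof.
  intros Hi Hx. assert (0 <= fst (inner d x x)).
  { unfold inner; rewrite fst_csum; apply rsum_nonneg; intros; rewrite fst_conj_mul; nra. }
  destruct (Rle_lt_or_eq_dec _ _ H); auto. exfalso. apply Hx. apply normsq_zero with d; auto.
Qed.

Lemma choose_c (N : R) (a : C) : 0 < N ->
  exists c, fst (Cmul (Cconj c) c) * N = 1 /\ snd (Cmul c a) = 0 /\ fst (Cmul c a) <= 0.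
Proof.
  intros HN. set (s := sqrt N). assert (Hs : 0 < s) by (apply sqrt_lt_R0; auto).
  assert (Hss : s * s = N) by (apply sqrt_sqrt; lra).
  destruct a as [a1 a2]. set (m := sqrt (a1 * a1 + a2 * a2)).
  assert (Hm2 : m * m = a1 * a1 + a2 * a2) by (apply sqrt_sqrt; nra).
  assert (Hm0 : 0 <= m) by apply sqrt_pos.
  destruct (Rle_lt_or_eq_dec _ _ Hm0) as [Hm|Hm].
  - exists (- a1 / (m * s), a2 / (m * s)). unfold Cmul, Cconj; simpl. split; [|split].
    + rewrite <- Hss. transitivity ((a1*a1+a2*a2)/(m*m)); [field; split; lra | rewrite <- Hm2; field; lra].
    + field. split; lra.
    + replace (- a1 / (m * s) * a1 - a2 / (m * s) * a2) with (- (m * m) / (m * s)) by (rewrite Hm2; field; split; lra).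
      replace (- (m * m) / (m * s)) with (- m / s) by (field; split; lra).
      apply Rmult_le_reg_r with s; auto. unfold Rdiv. rewrite Rmult_assoc, Rinv_l; lra.
  - exists (/ s, 0). unfold Cmul, Cconj; simpl.
    assert (a1 = 0 /\ a2 = 0) by nra. destruct H as [-> ->].
    split; [|split]; try lra. rewrite <- Hss. field. lra.
Qed.

Lemma supp_pinf d rho sigma : density d rho -> psd d sigma -> ~ supp_incl d rho sigma ->
  exists u, orthonormal d u /\ gval d rho sigma u = PInf.
Proof.
  intros [Hr _] Hs Hn. unfold supp_incl in Hn.
  apply Classical_Pred_Type.not_all_ex_not in Hn. destruct Hn as [x Hn].
  apply Classical_Prop.imply_to_and in Hn. destruct Hn as [Hsx Hn].
  apply Classical_Pred_Type.not_all_ex_not in Hn. destruct Hn as [i Hn].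
  apply Classical_Prop.imply_to_and in Hn. destruct Hn as [Hi Hrx].
  assert (Hd : (0 < d)%nat) by lia.
  assert (Hpx : 0 < fst (inner d x (mapply d rho x))).
  { assert (0 <= fst (inner d x (mapply d rho x))) by apply Hr.
    destruct (Rle_lt_or_eq_dec _ _ H); auto. exfalso. apply Hrx.
    apply psd_kernel; auto. }
  assert (Hqx : inner d x (mapply d sigma x) = C0).
  { apply csum_zero. intros j Hj. rewrite Hsx by auto. ring. }
  assert (Hx : exists j, (j < d)%nat /\ x j <> C0).
  { apply Classical_Prop.NNPP; intros Hno. apply Hrx. unfold mapply. apply csum_zero.
    intros j Hj. destruct (Classical_Prop.classic (x j = C0)) as [E|E].
    rewrite E; ring. exfalso; apply Hno; eauto. }
  destruct Hx as [j [Hj Hxj]].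
  pose proof (normsq_pos d x j Hj Hxj) as HN.
  destruct (choose_c _ (x 0%nat) HN) as [c [Hc1 [Hc2 Hc3]]].
  set (y := fun i => Cmul c (x i)).
  assert (Hyy : fst (inner d y y) = 1).
  { unfold y. rewrite inner_scale2, fst_normmul. lra. }
  destruct (householder d y Hd Hyy Hc2 Hc3) as [u [Hu Hu0]].
  exists u. split; auto.
  assert (Hcpos : 0 < fst (Cmul (Cconj c) c)).
  { rewrite fst_conj_mul. rewrite fst_conj_mul in Hc1. nra. }
  unfold gval. apply Esum_pinf with 0%nat; auto.
  - intros; apply rel_term_not_minf.
  - unfold pk. rewrite !(quad_ext d _ (u 0%nat) y) by auto. unfold y.
    rewrite !inner_scale, Hqx, !fst_normmul.
    unfold rel_term. destruct Req_EM_T as [E|E]. { exfalso. nra. }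
    destruct Req_EM_T as [E2|E2]; [reflexivity|]. exfalso; apply E2. simpl; ring.
Qed.


Definition incr (phi : nat -> nat) := forall n, (phi n < phi (S n))%nat.

Lemma incr_ge phi : incr phi -> forall n, (n <= phi n)%nat.
Proof. intros H n; induction n; [lia|]. specialize (H n). lia. Qed.

Lemma incr_comp phi psi : incr phi -> incr psi -> incr (fun n => phi (psi n)).
Proof.
  intros H1 H2 n. assert (forall a b, (a < b)%nat -> (phi a < phi b)%nat).
  { intros a b Hab. induction Hab. apply H1. specialize (H1 m). lia. }
  apply H; apply H2.
Qed.

Lemma subseq_cv s l phi : incr phi -> Un_cv s l -> Un_cv (fun n => s (phi n)) l.
Proof.
  intros Hp H eps He. destruct (H eps He) as [N HN]. exists N. intros n Hn.
  apply HN. pose proof (incr_ge phi Hp n). lia.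
Qed.

Lemma inv_small eps : 0 < eps -> exists N : nat, forall n, (n >= N)%nat -> / (INR n + 1) < eps.
Proof.
  intros He. destruct (archimed (/ eps)) as [H1 _].
  assert (0 < / eps) by (apply Rinv_0_lt_compat; auto).
  assert (0 < IZR (up (/ eps))) by lra.
  exists (Z.to_nat (up (/ eps))). intros n Hn.
  assert (Hz : (0 <= up (/ eps))%Z) by (apply le_IZR; lra).
  apply le_INR in Hn. rewrite INR_IZR_INZ, Z2Nat.id in Hn by auto.
  apply Rlt_le_trans with (/ / eps).
  - apply Rinv_lt_contravar; [nra|lra].
  - rewrite Rinv_inv; lra.
Qed.

Lemma cluster_subseq a l : (forall eps, 0 < eps -> forall N, exists p, (N <= p)%nat /\ Rabs (a p - l) < eps) ->
  exists phi, incr phi /\ Un_cv (fun n => a (phi n)) l.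
Proof.
  intros H.
  set (pick := fun N eps => epsilon (inhabits 0%nat) (fun p => (N <= p)%nat /\ Rabs (a p - l) < eps)).
  assert (Hpick : forall N eps, 0 < eps -> (N <= pick N eps)%nat /\ Rabs (a (pick N eps) - l) < eps).
  { intros N eps He. unfold pick. apply epsilon_spec. apply H; auto. }
  set (phi := fix f n := match n with O => pick O 1 | S m => pick (S (f m)) (/ (INR (S m) + 1)) end).
  assert (Hpos : forall n, 0 < / (INR n + 1)).
  { intros; apply Rinv_0_lt_compat. pose proof (pos_INR n); lra. }
  assert (Hb : forall n, Rabs (a (phi n) - l) < / (INR n + 1)).
  { intros [|n].
    - change (phi 0%nat) with (pick 0%nat 1). change (INR 0) with 0.
      replace (/ (0 + 1)) with 1 by field. apply Hpick; lra.
    - change (phi (S n)) with (pick (S (phi n)) (/ (INR (S n) + 1))). apply Hpick. apply Hpos. }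
  exists phi. split.
  - intros n. change (phi (S n)) with (pick (S (phi n)) (/ (INR (S n) + 1))). pose proof (Hpick (S (phi n)) (/ (INR (S n) + 1)) (Hpos _)). lia.
  - intros eps He. destruct (inv_small eps He) as [N HN]. exists N. intros n Hn.
    unfold Rdist. apply Rlt_trans with (/ (INR n + 1)); auto.
Qed.

Lemma BW1 a B : (forall n, Rabs (a n) <= B) -> exists phi l, incr phi /\ Un_cv (fun n => a (phi n)) l.
Proof.
  intros Hb. destruct (Bolzano_Weierstrass a (fun c => - B <= c <= B) (compact_P3 (-B) B)) as [l Hl].
  { intros n. specialize (Hb n). pose proof (Rabs_Ropp (a n)). pose proof (Rle_abs (- a n)). pose proof (Rle_abs (a n)). lra. }
  destruct (cluster_subseq a l) as [phi [H1 H2]].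
  { intros eps He N. assert (Hn : neighbourhood (fun y => Rabs (y - l) < eps) l).
    { exists (mkposreal eps He). intros y Hy. exact Hy. }
    destruct (Hl _ N Hn) as [p [Hp1 Hp2]]. exists p; auto. }
  exists phi, l; auto.
Qed.

Lemma multi_extract (X : Type) (cs : list (X -> R)) (x : nat -> X) B :
  (forall c n, In c cs -> Rabs (c (x n)) <= B) ->
  exists phi, incr phi /\ forall c, In c cs -> exists l, Un_cv (fun n => c (x (phi n))) l.
Proof.
  revert x. induction cs as [|c cs IH]; intros x Hb.
  - exists (fun n => n). split; [intros n; lia|]. intros c [].
  - destruct (IH x) as [phi1 [Hp1 Hc1]]. { intros; apply Hb; simpl; auto. }
    destruct (BW1 (fun n => c (x (phi1 n))) B) as [phi2 [l [Hp2 Hl]]].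
    { intros; apply Hb; simpl; auto. }
    exists (fun n => phi1 (phi2 n)). split; [apply incr_comp; auto|].
    intros c' [E|Hin].
    + subst. exists l. exact Hl.
    + destruct (Hc1 c' Hin) as [l' Hl']. exists l'.
      apply (subseq_cv (fun n => c' (x (phi1 n))) l' phi2); auto.
Qed.


Definition Ccv (s : nat -> C) (l : C) :=
  Un_cv (fun n => fst (s n)) (fst l) /\ Un_cv (fun n => snd (s n)) (snd l).

Lemma cv_const c : Un_cv (fun _ => c) c.
Proof. intros e He. exists O. intros. unfold Rdist. rewrite Rminus_diag, Rabs_R0; lra. Qed.

Lemma Ccv_const c : Ccv (fun _ => c) c.
Proof. split; apply cv_const. Qed.

Lemma Ccv_add s t a b : Ccv s a -> Ccv t b -> Ccv (fun n => Cadd (s n) (t n)) (Cadd a b).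
Proof. intros [H1 H2] [H3 H4]. split; simpl; apply CV_plus; auto. Qed.

Lemma Ccv_mul s t a b : Ccv s a -> Ccv t b -> Ccv (fun n => Cmul (s n) (t n)) (Cmul a b).
Proof.
  intros [H1 H2] [H3 H4]. split; simpl.
  - apply CV_minus; apply CV_mult; auto.
  - apply CV_plus; apply CV_mult; auto.
Qed.

Lemma Ccv_conj s a : Ccv s a -> Ccv (fun n => Cconj (s n)) (Cconj a).
Proof.
  intros [H1 H2]. split; simpl; auto.
  apply CV_opp in H2. apply (Un_cv_ext (opp_seq (fun n => snd (s n)))); auto.
Qed.

Lemma Ccv_csum m f g : (forall k, (k < m)%nat -> Ccv (fun n => f n k) (g k)) ->
  Ccv (fun n => csum m (f n)) (csum m g).
Proof.
  induction m; intros H; simpl.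
  - apply Ccv_const.
  - apply Ccv_add; [apply IHm; intros; apply H; lia | apply H; lia].
Qed.

Lemma Ccv_unique s a b : Ccv s a -> Ccv s b -> a = b.
Proof. intros [H1 H2] [H3 H4]. apply C_ext; eapply UL_sequence; eauto. Qed.

Lemma cv_rsum m f g : (forall k, (k < m)%nat -> Un_cv (fun n => f n k) (g k)) ->
  Un_cv (fun n => rsum m (f n)) (rsum m g).
Proof.
  induction m; intros H; simpl.
  - apply cv_const.
  - apply CV_plus; [apply IHm; intros; apply H; lia | apply H; lia].
Qed.

Lemma cv_ln s l : 0 < l -> Un_cv s l -> Un_cv (fun n => ln (s n)) (ln l).
Proof.
  intros Hl H. apply continuity_seq; auto.
  apply derivable_continuous_pt. exists (/ l). apply derivable_pt_lim_ln; auto.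
Qed.

Definition HUdef d (U : nat -> nat -> Vec) (us : nat -> Vec) :=
  forall k i, (k < d)%nat -> (i < d)%nat -> Ccv (fun n => U n k i) (us k i).

Lemma Ccv_inner d U us (HU : HUdef d U us) k l : (k < d)%nat -> (l < d)%nat ->
  Ccv (fun n => inner d (U n k) (U n l)) (inner d (us k) (us l)).
Proof.
  intros Hk Hl. unfold inner. apply Ccv_csum. intros i Hi.
  apply Ccv_mul; [apply Ccv_conj|]; apply HU; auto.
Qed.

Lemma Ccv_quad d U us (HU : HUdef d U us) A k : (k < d)%nat ->
  Ccv (fun n => inner d (U n k) (mapply d A (U n k))) (inner d (us k) (mapply d A (us k))).
Proof.
  intros Hk. unfold inner, mapply. apply Ccv_csum. intros i Hi.
  apply Ccv_mul; [apply Ccv_conj; apply HU; auto|].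
  apply Ccv_csum. intros j Hj. apply Ccv_mul; [apply Ccv_const|apply HU; auto].
Qed.

Definition Gv d rho sigma u := rsum d (fun k => pk d rho u k * (ln (pk d rho u k) - ln (pk d sigma u k))).

Lemma pk_pos d A u k : pd d A -> orthonormal d u -> (k < d)%nat -> 0 < pk d A u k.
Proof.
  intros [_ HA] Hu Hk. apply HA. apply unit_nonzero.
  rewrite Hu by auto. destruct Nat.eq_dec; [reflexivity|lia].
Qed.

Lemma gval_fin d rho sigma u : pd d rho -> pd d sigma -> orthonormal d u ->
  gval d rho sigma u = Fin (Gv d rho sigma u).
Proof.
  intros Hr Hs Hu. unfold gval, Gv. apply Esum_fin. intros k Hk.
  pose proof (pk_pos d rho u k Hr Hu Hk). pose proof (pk_pos d sigma u k Hs Hu Hk).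
  unfold rel_term. destruct Req_EM_T; [lra|]. destruct Req_EM_T; [lra|].
  f_equal. f_equal. unfold Rdiv. rewrite ln_mult, ln_Rinv; try lra. apply Rinv_0_lt_compat; auto.
Qed.

Lemma std_ortho d : orthonormal d (fun k i => kd k i).
Proof.
  intros k l Hk Hl. unfold inner.
  rewrite (csum_ext d _ (fun i => Cmul (kd i k) (kd l i))).
  - rewrite csum_delta by auto. unfold kd; destruct (Nat.eq_dec l k), (Nat.eq_dec k l); try lia; reflexivity.
  - intros i Hi. unfold kd; repeat destruct Nat.eq_dec; try lia; subst; apply C_ext; unfold Cconj, Cmul, C0, C1; simpl; ring.
Qed.

Lemma lim_ge s L V : Un_cv s L -> (forall n, V - / (INR n + 1) < s n) -> V <= L.
Proof.
  intros H Hs. apply Rnot_lt_le; intros Hlt.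
  set (e := (V - L) / 2). assert (He : 0 < e) by (unfold e; lra).
  destruct (H e He) as [N1 HN1]. destruct (inv_small e He) as [N2 HN2].
  set (n := max N1 N2). specialize (HN1 n (Nat.le_max_l _ _)). specialize (HN2 n (Nat.le_max_r _ _)).
  specialize (Hs n). unfold Rdist in HN1. pose proof (Rle_abs (s n - L)). unfold e in *. lra.
Qed.

Lemma lim_unbounded s L : Un_cv s L -> (forall n, INR n < s n) -> False.
Proof.
  intros H Hs. destruct (H 1 Rlt_0_1) as [N HN].
  destruct (archimed (Rabs L + 1)) as [H1 _].
  assert (Hz : (0 <= up (Rabs L + 1))%Z) by (apply le_IZR; pose proof (Rabs_pos L); lra).
  set (n := (N + Z.to_nat (up (Rabs L + 1)))%nat).
  specialize (HN n ltac:(unfold n; lia)). specialize (Hs n).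
  assert (INR n >= IZR (up (Rabs L + 1))).
  { unfold n. rewrite plus_INR, (INR_IZR_INZ (Z.to_nat _)), Z2Nat.id by auto. pose proof (pos_INR N). lra. }
  unfold Rdist in HN. pose proof (Rle_abs (s n - L)). pose proof (Rle_abs L). lra.
Qed.

Lemma rsum_ge_term n f i : (forall k, (k < n)%nat -> 0 <= f k) -> (i < n)%nat -> f i <= rsum n f.
Proof.
  induction n; intros H Hi; [lia|]. simpl.
  destruct (Nat.eq_dec i n).
  - subst. assert (0 <= rsum n f) by (apply rsum_nonneg; intros; apply H; lia). lra.
  - assert (f i <= rsum n f) by (apply IHn; auto; try lia; intros; apply H; lia).
    assert (0 <= f n) by (apply H; lia). lra.
Qed.

Lemma coord_bound d x i : inner d x x = C1 -> (i < d)%nat ->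
  Rabs (fst (x i)) <= 1 /\ Rabs (snd (x i)) <= 1.
Proof.
  intros H Hi. assert (Hf : fst (inner d x x) = 1) by (rewrite H; reflexivity).
  unfold inner in Hf. rewrite fst_csum in Hf.
  pose proof (rsum_ge_term d (fun i => fst (Cmul (Cconj (x i)) (x i))) i) as Hg.
  assert (fst (Cmul (Cconj (x i)) (x i)) <= 1).
  { rewrite <- Hf. apply Hg; auto. intros; rewrite fst_conj_mul; nra. }
  rewrite fst_conj_mul in H0.
  split; apply Rabs_le; nra.
Qed.

Lemma Ccv_ext s t a : (forall n, s n = t n) -> Ccv s a -> Ccv t a.
Proof.
  intros E [H1 H2]. split; [apply (Un_cv_ext (fun n => fst (s n)))|apply (Un_cv_ext (fun n => snd (s n)))];
  auto; intros; rewrite E; reflexivity.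
Qed.

Definition coords (d : nat) : list ((nat -> Vec) -> R) :=
  flat_map (fun k => flat_map (fun i => (fun u : nat -> Vec => fst (u k i)) :: (fun u : nat -> Vec => snd (u k i)) :: nil)
    (seq 0 d)) (seq 0 d).

Lemma coords_in d c : In c (coords d) ->
  exists k i, (k < d)%nat /\ (i < d)%nat /\ (c = (fun u => fst (u k i)) \/ c = (fun u => snd (u k i))).
Proof.
  unfold coords. intros H. apply in_flat_map in H. destruct H as [k [Hk H]].
  apply in_flat_map in H. destruct H as [i [Hi H]]. apply in_seq in Hk, Hi.
  exists k, i. split; [lia|split; [lia|]]. simpl in H. destruct H as [H|[H|[]]]; auto.
Qed.

Lemma coords_fst d k i : (k < d)%nat -> (i < d)%nat -> In (fun u : nat -> Vec => fst (u k i)) (coords d).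
Proof.
  intros Hk Hi. unfold coords. apply in_flat_map. exists k. split; [apply in_seq; lia|].
  apply in_flat_map. exists i. split; [apply in_seq; lia|]. simpl; auto.
Qed.
Lemma coords_snd d k i : (k < d)%nat -> (i < d)%nat -> In (fun u : nat -> Vec => snd (u k i)) (coords d).
Proof.
  intros Hk Hi. unfold coords. apply in_flat_map. exists k. split; [apply in_seq; lia|].
  apply in_flat_map. exists i. split; [apply in_seq; lia|]. simpl; auto.
Qed.

Definition limr (s : nat -> R) : R := epsilon (inhabits 0) (fun l => Un_cv s l).
Lemma limr_spec s l : Un_cv s l -> Un_cv s (limr s).
Proof. intros H. unfold limr. apply epsilon_spec. eauto. Qed.

Lemma attain d rho sigma v : density d rho -> pd d rho -> pd d sigma ->
  is_lub_E (DP_set d rho sigma) v -> exists u, orthonormal d u /\ gval d rho sigma u = v.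
Proof.
  intros Hr Hrp Hsp [Hub Hleast].
  assert (Hnm : v <> MInf).
  { intros E. assert (DP_set d rho sigma (gval d rho sigma (fun k i => kd k i))).
    { apply DP_set_iff. eexists; split; [apply std_ortho|reflexivity]. }
    specialize (Hub _ H). rewrite gval_fin in Hub by (auto; apply std_ortho). rewrite E in Hub. exact Hub. }
  set (T := fun n => match v with Fin V => V - / (INR n + 1) | _ => INR n end).
  assert (Hex : forall n, exists u, orthonormal d u /\ T n < Gv d rho sigma u).
  { intros n. apply Classical_Prop.NNPP; intros Hno.
    assert (Ele v (Fin (T n))).
    { apply Hleast. intros y Hy. apply DP_set_iff in Hy. destruct Hy as [u [Hu ->]].
      rewrite gval_fin by auto. simpl. apply Rnot_lt_le; intros Hlt. apply Hno; eauto. }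
    unfold T in H. destruct v as [V| |]; simpl in H; auto.
    assert (0 < / (INR n + 1)) by (apply Rinv_0_lt_compat; pose proof (pos_INR n); lra). lra. }
  set (U := fun n => epsilon (inhabits (fun _ _ => C0))
      (fun u => orthonormal d u /\ T n < Gv d rho sigma u)).
  assert (HUn : forall n, orthonormal d (U n) /\ T n < Gv d rho sigma (U n)).
  { intros n. unfold U. apply epsilon_spec. apply Hex. }
  destruct (multi_extract _ (coords d) U 1) as [phi [Hphi Hcv]].
  { intros c n Hc. apply coords_in in Hc. destruct Hc as [k [i [Hk [Hi Hc]]]].
    assert (Hb : Rabs (fst (U n k i)) <= 1 /\ Rabs (snd (U n k i)) <= 1).
    { apply (coord_bound d); auto. destruct (HUn n) as [Hu _]. rewrite Hu by auto.
      destruct Nat.eq_dec; [reflexivity|lia]. }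
    destruct Hc as [-> | ->]; apply Hb. }
  set (us := fun k i => (limr (fun n => fst (U (phi n) k i)), limr (fun n => snd (U (phi n) k i)))).
  assert (HU : HUdef d (fun n => U (phi n)) us).
  { intros k i Hk Hi. split; simpl.
    - destruct (Hcv _ (coords_fst d k i Hk Hi)) as [l Hl]. apply (limr_spec _ l Hl).
    - destruct (Hcv _ (coords_snd d k i Hk Hi)) as [l Hl]. apply (limr_spec _ l Hl). }
  assert (Hus : orthonormal d us).
  { intros k l Hk Hl. pose proof (Ccv_inner d _ us HU k l Hk Hl) as H.
    apply (Ccv_unique (fun n => inner d (U (phi n) k) (U (phi n) l))); auto.
    apply Ccv_ext with (fun _ => if Nat.eq_dec k l then C1 else C0); [|apply Ccv_const].
    intros n. destruct (HUn (phi n)) as [Hu _]. rewrite Hu by auto. reflexivity. }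
  assert (HG : Un_cv (fun n => Gv d rho sigma (U (phi n))) (Gv d rho sigma us)).
  { unfold Gv. apply cv_rsum. intros k Hk.
    pose proof (proj1 (Ccv_quad d _ us HU rho k Hk)) as Hp.
    pose proof (proj1 (Ccv_quad d _ us HU sigma k Hk)) as Hq.
    apply CV_mult; [exact Hp|]. apply CV_minus; apply cv_ln; auto; apply pk_pos; auto. }
  exists us. split; auto. rewrite gval_fin by auto.
  assert (Hle := Hub _ (proj2 (DP_set_iff _ _ _ _) (ex_intro _ us (conj Hus eq_refl)))).
  rewrite gval_fin in Hle by auto.
  destruct v as [V| |]; [| |contradiction].
  - simpl in Hle. f_equal. apply Rle_antisym; auto.
    apply (lim_ge _ _ V HG). intros n. destruct (HUn (phi n)) as [_ Hlt]. unfold T in Hlt.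
    eapply Rle_lt_trans; [|exact Hlt].
    assert (INR n <= INR (phi n)) by (apply le_INR; apply incr_ge; auto).
    assert (0 < INR n + 1) by (pose proof (pos_INR n); lra).
    assert (/ (INR (phi n) + 1) <= / (INR n + 1)) by (apply Rinv_le_contravar; lra). lra.
  - exfalso. apply (lim_unbounded _ _ HG). intros n. destruct (HUn (phi n)) as [_ Hlt]. unfold T in Hlt.
    assert (INR n <= INR (phi n)) by (apply le_INR; apply incr_ge; auto). lra.
Qed.


Lemma Ele_antisym x y : Ele x y -> Ele y x -> x = y.
Proof. destruct x, y; simpl; intros; try tauto; try f_equal; lra. Qed.

Lemma lub_exists (S : ER -> Prop) : exists v, is_lub_E S v.
Proof.
  destruct (Classical_Prop.classic (S PInf)) as [HP|HP].
  { exists PInf; split; [intros y _; destruct y; simpl; auto|].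
    intros z Hz. specialize (Hz _ HP). destruct z; simpl in *; auto. }
  destruct (Classical_Prop.classic (exists r, S (Fin r))) as [[r0 Hr0]|HF].
  2: { exists MInf; split.
       - intros y Hy. destruct y; simpl; auto. exfalso; apply HF; eauto.
       - intros; simpl; auto. }
  destruct (Classical_Prop.classic (bound (fun r => S (Fin r)))) as [Hb|Hb].
  - destruct (completeness _ Hb (ex_intro _ r0 Hr0)) as [m [Hm1 Hm2]].
    exists (Fin m); split.
    + intros y Hy. destruct y; simpl; auto; try (apply Hm1; auto); try contradiction.
    + intros z Hz. destruct z as [zz| |]; simpl; auto.
      * apply Hm2. intros r Hr. specialize (Hz _ Hr). exact Hz.
      * specialize (Hz _ Hr0); simpl in Hz; auto.
  - exists PInf; split; [intros y _; destruct y; simpl; auto|].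
    intros z Hz. destruct z as [zz| |]; simpl; auto.
    + apply Hb. exists zz. intros r Hr. exact (Hz _ Hr).
    + specialize (Hz _ Hr0); simpl in Hz; auto.
Qed.

Lemma lub_transfer (S T : ER -> Prop) v : is_lub_E S v ->
  (forall y, T y -> exists y', S y' /\ Ele y y') ->
  (forall y, S y -> forall z, (forall t, T t -> Ele t z) -> Ele y z) -> is_lub_E T v.
Proof.
  intros [H1 H2] HT HS. split.
  - intros y Hy. destruct (HT y Hy) as [y' [Hy' Hle]]. apply Ele_trans with y'; auto.
  - intros z Hz. apply H2. intros y Hy. apply HS; auto.
Qed.

Theorem lemma1 (d : nat) (rho sigma : Mat) :
  density d rho -> psd d sigma -> nonzero_mat d sigma ->
  exists v : ER,
    is_lub_E (DP_set d rho sigma) v /\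
    is_lub_E (set1 d rho sigma) v /\
    is_lub_E (set2 d rho sigma) v /\
    (~ supp_incl d rho sigma -> v = PInf) /\
    (pd d rho -> pd d sigma ->
       (exists w L, pd d w /\ mat_log d w L /\ Fin (var1 d rho sigma w L) = v) /\
       (exists w L, pd d w /\ mat_log d w L /\ Fin (var2 d rho sigma w L) = v)).
Proof.
  intros Hr Hs _.
  destruct (lub_exists (DP_set d rho sigma)) as [v Hv].
  assert (Hsets : forall which : bool,
    is_lub_E (fun y => if which then set1 d rho sigma y else set2 d rho sigma y) v).
  { intros which. apply lub_transfer with (DP_set d rho sigma); auto.
    - intros y Hy. destruct which;
      [destruct (set1_below d rho sigma y Hr Hs Hy) as [u [Hu Hle]]
      |destruct (set2_below d rho sigma y Hr Hs Hy) as [u [Hu Hle]]];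
      exists (gval d rho sigma u); split; auto; apply DP_set_iff; eauto.
    - intros y Hy z Hz. apply DP_set_iff in Hy. destruct Hy as [u [Hu ->]].
      apply DP_below with which; auto. }
  exists v. split; [auto|split; [exact (Hsets true)|split; [exact (Hsets false)|split]]].
  - intros Hn. destruct (supp_pinf d rho sigma Hr Hs Hn) as [u [Hu Hg]].
    assert (DP_set d rho sigma PInf) by (apply DP_set_iff; exists u; auto).
    destruct Hv as [Hv _]. specialize (Hv _ H). destruct v; simpl in Hv; tauto.
  - intros Hrp Hsp.
    destruct (attain d rho sigma v Hr Hrp Hsp Hv) as [u [Hu Hg]].
    set (p := pk d rho u). set (q := pk d sigma u).
    assert (Hpos : forall A k, pd d A -> (k < d)%nat -> 0 < pk d A u k).
    { intros A k [_ HA] Hk. apply HA. apply unit_nonzero.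
      rewrite Hu by auto. destruct Nat.eq_dec; [reflexivity|lia]. }
    set (lam := fun k => p k / q k).
    assert (Hl : forall k, (k < d)%nat -> 0 < lam k).
    { intros; apply Rdiv_lt_0_compat; apply Hpos; auto. }
    destruct (build d rho sigma u lam Hu Hl) as [_ [_ [w [L [Hw [HL [E1 E2]]]]]]].
    fold p q in E1, E2.
    assert (S1 : rsum d (fun k => lam k * q k) = 1).
    { rewrite <- (pk_sum d rho u Hr Hu). apply rsum_ext; intros k Hk.
      unfold lam, p, q. field. apply Rgt_not_eq, Hpos; auto. }
    assert (S2 : gval d rho sigma u = Fin (rsum d (fun k => ln (lam k) * p k))).
    { unfold gval. apply Esum_fin. intros k Hk. fold p q. unfold rel_term.
      destruct Req_EM_T as [E|E]. { pose proof (Hpos rho k Hrp Hk). fold p in H. lra. }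
      destruct Req_EM_T as [E'|E']. { pose proof (Hpos sigma k Hsp Hk). fold q in H. lra. }
      f_equal. unfold lam; ring. }
    rewrite S1 in E1, E2. rewrite ln_1 in E1.
    split; exists w, L; split; auto; split; auto; rewrite <- Hg, S2; f_equal;
      [rewrite E1|rewrite E2]; ring.
Qed.
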